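(* (i) For every state $s\in S$ there is exactly one finite sequence of feasible transitions $s_0\xrightarrow{\alpha_1\cdots\alpha_k}s$ with all actions $\alpha_i\in\{D,I,N_=,d_-,b_+\}$ (i.e. never using $N_<$) which visits $s_0$ only at its start. (ii) For every state $s\in S$ there is exactly one finite sequence of feasible transitions from $s$ to $s_0$ that never uses the action $I$ and visits $s_0$ only at its end. In particular the BDM Markov chain is irreducible.
   Context: Fix integers $M\ge 1$ and $q\ge 2$. The augmented state set is $\overline S=\{(b_1,\dots,b_M,d;T,t): b_m,d,T\in\mathbb Z,\ 1\le t\le M+1,\ d+T+\sum_{m=1}^M b_m=0\}$, and the BDM state set is $S=\{s\in\overline S: 0\le T\le M\}$, with initial state $s_0=(0,\dots,0,0;0,M+1)$. The feasible transitions (actions) from $s=(b_1,\dots,b_M,d;T,t)\in S$ are: (a) if $t\le M$ and $b_t>d$: action $D$ (probability $(q-1)/q$) to $(b_1,\dots,b_{t-1},d,b_{t+1},\dots,b_M,b_t;T,t+1)$ (swap of $b_t$ and $d$), and action $I$ (probability $1/q$) to $(b_1,\dots,b_M,d;T,t+1)$; (b) if $t\le M$ and $b_t=d$: action $N_=$ (probability 1) to $(b_1,\dots,b_M,d;T,t+1)$; (c) if $t\le M$ and $b_t<d$: action $N_<$ (probability 1) to $(b_1,\dots,b_M,d;T,t+1)$; (d) if $t=M+1$, $T<M$: action $d_-$ (probability 1) to $(b_1,\dots,b_M,d-1;T+1,1)$; (e) if $t=M+1$, $T=M$: action $b_+$ (probability 1) to $(b_1+1,\dots,b_M+1,d;0,1)$.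 *)

(* Defs.v *)
From mathcomp Require Import all_boot all_order all_algebra.
From Stdlib Require List.
Set Implicit Arguments. Unset Strict Implicit. Unset Printing Implicit Defensive.
Import Order.TTheory GRing.Theory Num.Theory.
Local Open Scope ring_scope.

(* A state (b_1,...,b_M, d; T, t) of the augmented state set.
   bs = [:: b_1; ...; b_M] (so b_m = nth 0 bs (m-1)), dd = d, TT = T, tt = t. *)
Record state := mkState { bs : seq int; dd : int; TT : int; tt : nat }.

Definition in_Sbar (M : nat) (s : state) : Prop :=
  size (bs s) = M /\ (1 <= tt s <= M.+1)%N /\
  dd s + TT s + \sum_(x <- bs s) x = 0.

Definition in_S (M : nat) (s : state) : Prop :=
  in_Sbar M s /\ 0 <= TT s /\ TT s <= (M%:Z).

Definition s0 (M : nat) : state := mkState (nseq M 0) 0 0 M.+1.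

Inductive action := aD | aI | aNeq | aNlt | adminus | abplus.

Definition bt (s : state) : int := nth 0 (bs s) (tt s).-1.

Definition step (M : nat) (s : state) (a : action) (s' : state) : Prop :=
  in_S M s /\
  match a with
  | aD => (tt s <= M)%N /\ bt s > dd s /\
          s' = mkState (set_nth 0 (bs s) (tt s).-1 (dd s)) (bt s) (TT s) (tt s).+1
  | aI => (tt s <= M)%N /\ bt s > dd s /\
          s' = mkState (bs s) (dd s) (TT s) (tt s).+1
  | aNeq => (tt s <= M)%N /\ bt s = dd s /\
          s' = mkState (bs s) (dd s) (TT s) (tt s).+1
  | aNlt => (tt s <= M)%N /\ bt s < dd s /\
          s' = mkState (bs s) (dd s) (TT s) (tt s).+1
  | adminus => tt s = M.+1 /\ TT s < M%:Z /\
          s' = mkState (bs s) (dd s - 1) (TT s + 1) 1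
  | abplus => tt s = M.+1 /\ TT s = M%:Z /\
          s' = mkState (map (fun x => x + 1) (bs s)) (dd s) 0 1
  end.

Definition prob (q : nat) (a : action) : rat :=
  match a with
  | aD => (q%:R - 1) / q%:R
  | aI => 1 / q%:R
  | _ => 1
  end.

(* p = [:: (a_1, s_1); ...; (a_k, s_k)] is a sequence of feasible transitions
   s --a_1--> s_1 --a_2--> ... --a_k--> s_k *)
Fixpoint tpath (M : nat) (s : state) (p : seq (action * state)) : Prop :=
  match p with
  | [::] => True
  | (a, s') :: p' => step M s a s' /\ tpath M s' p'
  end.

Definition endpoint (s : state) (p : seq (action * state)) : state :=
  last s (map snd p).

Definition actions (p : seq (action * state)) : seq action := map fst p.

(* Main.v *)
Require Import Defs.
From mathcomp Require Import all_boot all_order all_algebra.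
From mathcomp Require Import zify ring lra.
From Stdlib Require List.
Import Order.TTheory GRing.Theory Num.Theory.
Local Open Scope ring_scope.

Lemma set_nth_nth0 (s : seq int) n : (n < size s)%N -> set_nth 0 s n (nth 0 s n) = s.
Proof. elim: s n => [|x s IH] [|n] //= h. by rewrite IH. Qed.

Lemma set_nth_twice (s : seq int) n a b : set_nth 0 (set_nth 0 s n a) n b = set_nth 0 s n b.
Proof. by rewrite set_set_nth eqxx. Qed.

Lemma sum_set_nth (s : seq int) n y : (n < size s)%N ->
  \sum_(x <- set_nth 0 s n y) x = \sum_(x <- s) x - nth 0 s n + y.
Proof.
elim: s n => [|x s IH] [|n] //= h; rewrite !big_cons.
  ring.
rewrite IH //. ring.
Qed.

Lemma sum_map_add (s : seq int) c :
  \sum_(x <- map (fun x => x + c) s) x = \sum_(x <- s) x + (size s)%:Z * c.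
Proof.
elim: s => [|x s IH] /=; first by rewrite big_nil mul0r addr0.
rewrite !big_cons IH -addn1 PoszD mulrDl mul1r. ring.
Qed.

Lemma sum_lb (s : seq int) (m : int) : (forall i, (i < size s)%N -> m <= nth 0 s i) ->
  (size s)%:Z * m <= \sum_(x <- s) x.
Proof.
elim: s => [|x s IH] /= h; first by rewrite big_nil mul0r.
rewrite big_cons.
have h0 := h 0%N isT.
rewrite -addn1 PoszD mulrDl mul1r addrC; apply: lerD => //; exact: IH (fun i hi => h i.+1 hi).
Qed.

Lemma sum_ub (s : seq int) (m : int) : (forall i, (i < size s)%N -> nth 0 s i <= m) ->
  \sum_(x <- s) x <= (size s)%:Z * m.
Proof.
elim: s => [|x s IH] /= h; first by rewrite big_nil mul0r.
rewrite big_cons.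
have h0 := h 0%N isT.
rewrite -addn1 PoszD mulrDl mul1r [_ + m]addrC; apply: lerD => //; exact: IH (fun i hi => h i.+1 hi).
Qed.

Lemma all_eq_nseq (s : seq int) M : size s = M -> (forall i, (i < M)%N -> nth 0 s i = 0) -> s = nseq M 0.
Proof.
move=> hs h; apply: (@eq_from_nth _ 0); first by rewrite size_nseq.
move=> i hi; rewrite nth_nseq -hs hi; apply: h; by rewrite -hs.
Qed.

Lemma step_S M s a s' : step M s a s' -> in_S M s'.
Proof.
case: s => B d T t; rewrite /step /in_S /in_Sbar /bt /=.
move=> [[[hs [/andP[ht1 ht2] hsum]] [hT1 hT2]]].
case: a => /=.
- move=> [htM [hlt ->]] /=.
  have hi : ((t.-1) < size B)%N by rewrite hs; lia.
  rewrite size_set_nth hs sum_set_nth //.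
  split; [split; [lia| split; [lia|]] |]; [|lia].
  apply: (etrans _ hsum); ring.
- move=> [htM [hlt ->]] /=. split; [split; [lia| split; [lia|]] |]; [exact: hsum|lia].
- move=> [htM [hlt ->]] /=. split; [split; [lia| split; [lia|]] |]; [exact: hsum|lia].
- move=> [htM [hlt ->]] /=. split; [split; [lia| split; [lia|]] |]; [exact: hsum|lia].
- move=> [htM [hlt ->]] /=. split; [split; [lia| split; [lia|]] |]; last lia.
  move: hsum; set S := \sum_(x <- B) x; lia.
- move=> [htM [hlt ->]] /=. rewrite size_map sum_map_add hs.
  split; [split; [lia| split; [lia|]] |]; last lia.
  move: hsum; set S := \sum_(x <- B) x; lia.
Qed.

Definition Pst (M : nat) (s : state) : state :=
  if tt s == 1%N then
    (if TT s == 0 then mkState (map (fun x => x - 1) (bs s)) (dd s) M%:Z M.+1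
     else mkState (bs s) (dd s + 1) (TT s - 1) M.+1)
  else if nth 0 (bs s) (tt s).-2 < dd s then
    mkState (set_nth 0 (bs s) (tt s).-2 (dd s)) (nth 0 (bs s) (tt s).-2) (TT s) (tt s).-1
  else mkState (bs s) (dd s) (TT s) (tt s).-1.

Definition Pact (s : state) : action :=
  if tt s == 1%N then (if TT s == 0 then abplus else adminus)
  else if nth 0 (bs s) (tt s).-2 < dd s then aD
  else if dd s < nth 0 (bs s) (tt s).-2 then aI else aNeq.

Lemma step_pred M s a x : a <> aNlt -> step M x a s -> x = Pst M s /\ a = Pact s.
Proof.
case: x => B d T t; rewrite /step /in_S /in_Sbar /bt /=.
move=> hna [[[hs [/andP[ht1 ht2] hsum]] [hT1 hT2]]].
have tpos : t = t.-1.+1 by lia.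
case: a hna => // _.
- move=> [htM [hlt ->]]; rewrite /Pst /Pact /=.
  have -> : (t.+1 == 1%N) = false by lia.
  have hi : ((t.-1) < size B)%N by rewrite hs; lia.
  rewrite nth_set_nth /= eqxx hlt set_nth_twice set_nth_nth0 //.
- move=> [htM [hlt ->]]; rewrite /Pst /Pact /=.
  have -> : (t.+1 == 1%N) = false by lia.
  have -> : (nth 0 B t.-1 < d) = false by apply/negbTE; rewrite -leNgt ltW.
  by rewrite hlt.
- move=> [htM [hlt ->]]; rewrite /Pst /Pact /=.
  have -> : (t.+1 == 1%N) = false by lia.
  by rewrite hlt ltxx.
- move=> [htM [hlt ->]]; rewrite /Pst /Pact /=.
  have -> : (T + 1 == 0) = false by lia.
  rewrite htM. split; [congr mkState; ring|by []].
- move=> [htM [hlt ->]]; rewrite /Pst /Pact /= htM hlt.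
  have -> : [seq x - 1 | x <- [seq x + 1 | x <- B]] = B.
    by elim: (B) => //= x B' ->; congr cons; ring.
  by [].
Qed.

Definition Fst (M : nat) (s : state) : state :=
  if (tt s <= M)%N then
    (if dd s < bt s then mkState (set_nth 0 (bs s) (tt s).-1 (dd s)) (bt s) (TT s) (tt s).+1
     else mkState (bs s) (dd s) (TT s) (tt s).+1)
  else if TT s < M%:Z then mkState (bs s) (dd s - 1) (TT s + 1) 1
  else mkState (map (fun x => x + 1) (bs s)) (dd s) 0 1.

Definition Fact (M : nat) (s : state) : action :=
  if (tt s <= M)%N then
    (if dd s < bt s then aD else if bt s == dd s then aNeq else aNlt)
  else if TT s < M%:Z then adminus else abplus.

Lemma step_fwd M s a y : a <> aI -> step M s a y -> y = Fst M s /\ a = Fact M s.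
Proof.
rewrite /step /Fst /Fact.
move=> hna [_ H]; case: a hna H => // _.
- by move=> [htM [hlt ->]]; rewrite htM hlt.
- move=> [htM [hlt ->]]; rewrite htM hlt ltxx eqxx; by [].
- move=> [htM [hlt ->]]; rewrite htM.
  have -> : (dd s < bt s) = false by apply/negbTE; rewrite -leNgt ltW.
  by rewrite lt_eqF.
- move=> [htM [hlt ->]]; rewrite htM hlt. by have -> : (M.+1 <= M)%N = false by lia.
- move=> [htM [hlt ->]]; rewrite htM hlt ltxx. by have -> : (M.+1 <= M)%N = false by lia.
Qed.

Lemma Forall_rcons {T} (P : T -> Prop) l x : List.Forall P (rcons l x) <-> List.Forall P l /\ P x.
Proof.
elim: l => [|y l IH] /=.
  split; [move=> H; inversion H; split => //|case=> _ hx; constructor => //].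
split.
  move=> H; inversion H; subst. have [h1 h2] := (proj1 IH H3). split => //; constructor => //.
case=> H hx; inversion H; subst; constructor => //; apply/IH; split => //.
Qed.

Lemma tpath_rcons M x p a y :
  tpath M x (rcons p (a, y)) <-> tpath M x p /\ step M (endpoint x p) a y.
Proof.
elim: p x => [|[b z] p IH] x /=; first by split; [case=> h _; split|case=> _ h; split].
rewrite IH /endpoint /=. split; [case=> h1 [h2 h3]|case=> [[h1 h2] h3]]; by [].
Qed.

Lemma endpoint_rcons x p ay : endpoint x (rcons p ay) = ay.2.
Proof. by rewrite /endpoint map_rcons last_rcons. Qed.

Lemma tpath_cat M x p q : tpath M x (p ++ q) <-> tpath M x p /\ tpath M (endpoint x p) q.
Proof.
elim: p x => [|[b z] p IH] x /=; first by split; [move=> h; split|case].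
rewrite IH /endpoint /=. split; [case=> h1 [h2 h3]|case=> [[h1 h2] h3]]; by [].
Qed.

Lemma endpoint_cat x p q : endpoint x (p ++ q) = endpoint (endpoint x p) q.
Proof. by rewrite /endpoint map_cat last_cat. Qed.

Definition BR M s := exists p : seq (action * state),
  tpath M (s0 M) p /\ endpoint (s0 M) p = s /\
  List.Forall (fun a => a <> aNlt) (actions p) /\
  List.Forall (fun x => x <> s0 M) (map snd p).

Definition FR M s := exists p : seq (action * state),
  tpath M s p /\ endpoint s p = s0 M /\
  List.Forall (fun a => a <> aI) (actions p) /\
  List.Forall (fun x => x <> s0 M) (belast s (map snd p)).

Lemma BR_s0 M : BR M (s0 M).
Proof. by exists [::]. Qed.

Lemma FR_s0 M : FR M (s0 M).
Proof. by exists [::]. Qed.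

Lemma BR_ext M x a s : BR M x -> step M x a s -> a <> aNlt -> s <> s0 M -> BR M s.
Proof.
move=> [p [h1 [h2 [h3 h4]]]] hs ha hne.
exists (rcons p (a, s)); rewrite tpath_rcons endpoint_rcons /actions !map_rcons !Forall_rcons h2.
by [].
Qed.

Lemma FR_ext M s a y : FR M y -> step M s a y -> a <> aI -> s <> s0 M -> FR M s.
Proof.
move=> [p [h1 [h2 [h3 h4]]]] hs ha hne.
exists ((a, y) :: p) => /=; split; first by [].
split; first by [].
split; by constructor.
Qed.

Lemma nth_map_add (B : seq int) c i : (i < size B)%N ->
  nth 0 (map (fun x => x + c) B) i = nth 0 B i + c.
Proof. by elim: B i => [|x B IH] [|i] //= h; rewrite IH. Qed.

Lemma S_facts M s : in_S M s ->
  [/\ size (bs s) = M, (1 <= tt s)%N, (tt s <= M.+1)%N,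
      dd s + TT s + \sum_(x <- bs s) x = 0 & 0 <= TT s /\ TT s <= M%:Z].
Proof. by case=> [[h1 [/andP[h2 h3] h4]] h5]. Qed.

Lemma equal_vals M s v : in_S M s -> (forall i, (i < M)%N -> nth 0 (bs s) i = v) ->
  dd s = v -> (M.+1)%:Z * v = - TT s.
Proof.
move=> /S_facts [hs _ _ hsum _] hv hd.
have h1 := @sum_lb (bs s) v. have h2 := @sum_ub (bs s) v.
rewrite hs in h1 h2.
have e1 : M%:Z * v <= \sum_(x <- bs s) x by apply: h1 => i hi; rewrite hv // -hs.
have e2 : \sum_(x <- bs s) x <= M%:Z * v by apply: h2 => i hi; rewrite hv // -hs.
have e : \sum_(x <- bs s) x = M%:Z * v by apply/eqP; rewrite eq_le e1 e2.
rewrite -[M.+1]addn1 PoszD mulrDl mul1r -e -hd.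
apply/eqP; rewrite -subr_eq0; apply/eqP; apply: (etrans _ hsum); ring.
Qed.

Lemma s_is_s0 M s : in_S M s -> tt s = M.+1 -> dd s = 0 -> TT s = 0 ->
  (forall i, (i < M)%N -> nth 0 (bs s) i = 0) -> s = s0 M.
Proof.
move=> /S_facts [hs _ _ _ _] ht hd hT hb.
have hB := @all_eq_nseq _ _ hs hb.
by case: s hs ht hd hT hb hB => B d T t /= _ -> -> -> _ ->.
Qed.

Arguments S_facts {M s}. Arguments equal_vals {M s v}. Arguments s_is_s0 {M s}.
Arguments step_S {M s a s'}. Arguments step_pred {M s a x}. Arguments step_fwd {M s a y}.

Definition Inv (s : state) := forall i, (i < (tt s).-1)%N -> nth 0 (bs s) i <= dd s.
Definition lb (M : nat) (m : int) (s : state) :=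
  m <= dd s /\ forall i, (i < M)%N -> m <= nth 0 (bs s) i.
Definition mu (M : nat) (m : int) (s : state) : int :=
  (M.+1)%:Z * (- TT s - (M.+1)%:Z * m) + ((M.+1)%:Z - (tt s)%:Z).

Lemma mu_ge0 M m s : in_S M s -> lb M m s -> 0 <= mu M m s.
Proof.
move=> hS [hd hb]; have [hs h1 h2 hsum [hT1 hT2]] := S_facts hS.
have := @sum_lb (bs s) m; rewrite hs => /(_ hb) e.
rewrite /mu.
have hX : 0 <= - TT s - (M.+1)%:Z * m.
  rewrite -[M.+1]addn1 PoszD mulrDl mul1r.
  move: hsum e; set S := \sum_(x <- bs s) x => hsum e. lia.
have : 0 <= (M.+1)%:Z * (- TT s - (M.+1)%:Z * m) by apply: mulr_ge0.
lia.
Qed.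

Arguments mu_ge0 {M m s}. Arguments FR_ext {M s a y}. Arguments BR_ext {M x a s}.

Lemma s0_dec M s : {s = s0 M} + {s <> s0 M}.
Proof.
case: s => B d T t; rewrite /s0.
case: (B =P nseq M 0) => [->|h]; last by right => E; apply: h; case: E => *.
case: (d =P 0) => [->|h]; last by right => E; apply: h; case: E => *.
case: (T =P 0) => [->|h]; last by right => E; apply: h; case: E => *.
case: (t =P M.+1) => [->|h]; last by right => E; apply: h; case: E => *.
by left.
Qed.

Lemma F_main M (hM : (1 <= M)%N) n : forall s m, in_S M s -> Inv s -> lb M m s ->
  mu M m s < n%:Z -> FR M s.
Proof.
elim: n => [|n IH] s m hS hI hl hmu.
  have := mu_ge0 hS hl. lia.
have [hs ht1 ht2 hsum [hT1 hT2]] := S_facts hS.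
case: (s0_dec M s) => [->|hne]; first exact: FR_s0.
case: (leqP (tt s) M) => htM.
- have [hlt|hge] := ltP (dd s) (bt s).
  + set y := mkState (set_nth 0 (bs s) (tt s).-1 (dd s)) (bt s) (TT s) (tt s).+1.
    have hst : step M s aD y by split; last split.
    apply: (FR_ext _ hst) => //. apply: (IH y m (step_S hst)).
    * move=> i /= hi. rewrite nth_set_nth /=. case: eqP => [_|hne']; first exact: ltW.
      apply: le_trans (ltW hlt). apply: hI. lia.
    * split; first by rewrite /= /bt; apply: hl.2; lia.
      move=> i hi; rewrite /= nth_set_nth /=; case: eqP => _; [exact: hl.1 | exact: hl.2 i hi].
    * move: hmu; rewrite /mu /=. lia.
  + set y := mkState (bs s) (dd s) (TT s) (tt s).+1.
    have [a [hna hst]] : exists a, a <> aI /\ step M s a y.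
      case: (eqVneq (bt s) (dd s)) => h.
        exists aNeq; split; first by []. split; first exact: hS.
        split; first exact: htM. by split.
      exists aNlt; split; first by []. split; first exact: hS.
      split; first exact: htM. split; last by [].
      by rewrite lt_neqAle h hge.
    apply: (FR_ext _ hst) => //. apply: (IH y m (step_S hst)).
    * move=> i /= hi. case: (eqVneq i (tt s).-1) => [->|hne']; first exact: hge.
      apply: hI. lia.
    * exact: hl.
    * move: hmu; rewrite /mu /=. lia.
- have htM1 : tt s = M.+1 by lia.
  have hall : forall i, (i < M)%N -> nth 0 (bs s) i <= dd s by move=> i hi; apply: hI; lia.
  have allm : dd s = m -> forall i, (i < M)%N -> nth 0 (bs s) i = m.
    move=> E i hi; apply/eqP; rewrite eq_le hl.2 // andbT -E; exact: hall.
  have [hTlt|hTge] := ltP (TT s) M%:Z.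
  + set y := mkState (bs s) (dd s - 1) (TT s + 1) 1.
    have hst : step M s adminus y by split; last split.
    have hdm : m < dd s.
      rewrite lt_neqAle hl.1 andbT; apply/eqP => E.
      have E1 := equal_vals hS (allm (esym E)) (esym E).
      have hm0 : m = 0 by nia.
      have hT0 : TT s = 0 by nia.
      apply: hne; apply: s_is_s0 => //; first by rewrite -E.
      by move=> i hi; rewrite (allm (esym E)).
    apply: (FR_ext _ hst) => //. apply: (IH y m (step_S hst)).
    * by move=> i /=.
    * split; first by rewrite /=; lia.
      exact: hl.2.
    * move: hmu; rewrite /mu /= htM1. lia.
  + have hTM : TT s = M%:Z by apply/eqP; rewrite eq_le hT2 hTge.
    set y := mkState (map (fun x => x + 1) (bs s)) (dd s) 0 1.
    have hst : step M s abplus y by split; last split.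
    have hdm : m < dd s.
      rewrite lt_neqAle hl.1 andbT; apply/eqP => E.
      have E1 := equal_vals hS (allm (esym E)) (esym E).
      rewrite hTM in E1. have [hm|hm] : 0 <= m \/ m <= -1 by lia.
      nia. nia.
    apply: (FR_ext _ hst) => //. apply: (IH y (m + 1) (step_S hst)).
    * by move=> i /=.
    * split; first by rewrite /=; lia.
      move=> i hi /=; rewrite nth_map_add; last by rewrite hs.
      have := hl.2 i hi; lia.
    * move: hmu; rewrite /mu /= htM1 hTM. lia.
Qed.

Lemma list_lb (B : seq int) : exists m : int, forall i, (i < size B)%N -> m <= nth 0 B i.
Proof.
elim: B => [|x B [m IH]]; first by exists 0.
have [h|h] := leP x m.
- exists x => -[|i] //= hi; apply: le_trans h _; exact: IH.
- exists m => -[|i] //= hi; [exact: ltW | exact: IH].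
Qed.

Lemma lb_exists M s : in_S M s -> exists m, lb M m s.
Proof.
move=> /S_facts [hs _ _ _ _]. have [m hm] := list_lb (bs s).
have [h|h] := leP (dd s) m.
- exists (dd s); split => // i hi; apply: le_trans h _; apply: hm; by rewrite hs.
- exists m; split; [exact: ltW| move=> i hi; apply: hm; by rewrite hs].
Qed.

Arguments lb_exists {M s}.

Lemma F_inv M (hM : (1 <= M)%N) s : in_S M s -> Inv s -> FR M s.
Proof.
move=> hS hI; have [m hl] := lb_exists hS.
have h0 := mu_ge0 hS hl.
apply: (@F_main M hM `|mu M m s|.+1 s m) => //.
lia.
Qed.

Lemma fwd_exists M s : in_S M s -> exists a y, a <> aI /\ step M s a y /\
  ((tt s <= M)%N -> tt y = (tt s).+1) /\ (tt s = M.+1 -> tt y = 1%N).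
Proof.
move=> hS; have [hs ht1 ht2 hsum [hT1 hT2]] := S_facts hS.
case: (leqP (tt s) M) => htM.
- have [hlt|hge] := ltP (dd s) (bt s).
  + exists aD, (mkState (set_nth 0 (bs s) (tt s).-1 (dd s)) (bt s) (TT s) (tt s).+1).
    split; first by []. split; first by split; last split.
    split; [by [] | move=> E; lia].
  + exists (if bt s == dd s then aNeq else aNlt), (mkState (bs s) (dd s) (TT s) (tt s).+1).
    split; first by case: eqP.
    split; last by split => // E; lia.
    split; first exact: hS.
    case: (eqVneq (bt s) (dd s)) => h /=.
      by split.
    split; first exact: htM. split; last by [].
    by rewrite lt_neqAle h hge.
- have htM1 : tt s = M.+1 by lia.
  have [hTlt|hTge] := ltP (TT s) M%:Z.
  + exists adminus, (mkState (bs s) (dd s - 1) (TT s + 1) 1).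
    split; first by []. split; first by split; last split.
    split; [move=> E; lia | by []].
  + have hTM : TT s = M%:Z by apply/eqP; rewrite eq_le hT2 hTge.
    exists abplus, (mkState (map (fun x => x + 1) (bs s)) (dd s) 0 1).
    split; first by []. split; first by split; last split.
    split; [move=> E; lia | by []].
Qed.

Arguments fwd_exists {M s}.

Lemma F_all M (hM : (1 <= M)%N) s : in_S M s -> FR M s.
Proof.
move=> hS.
have [k hk] : exists k, (M.+1 - tt s)%N = k by eexists.
elim: k s hS hk => [|k IH] s hS hk.
- have [hs ht1 ht2 _ _] := S_facts hS.
  case: (s0_dec M s) => [->|hne]; first exact: FR_s0.
  have [a [y [hna [hst [_ hty]]]]] := fwd_exists hS.
  apply: (FR_ext _ hst) => //.
  apply: F_inv => //; first exact: step_S hst.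
  rewrite /Inv hty //; lia.
- have [hs ht1 ht2 _ _] := S_facts hS.
  have htM : (tt s <= M)%N by lia.
  have [a [y [hna [hst [hty _]]]]] := fwd_exists hS.
  apply: (FR_ext _ hst) => //; last by move=> E; rewrite E /= in htM; lia.
  apply: IH; first exact: step_S hst.
  rewrite hty //; lia.
Qed.

Definition JInv (M : nat) (s : state) :=
  forall i, ((tt s).-1 <= i)%N -> (i < M)%N -> dd s <= nth 0 (bs s) i.
Definition ub (M : nat) (m : int) (s : state) :=
  dd s <= m /\ forall i, (i < M)%N -> nth 0 (bs s) i <= m.
Definition nu (M : nat) (m : int) (s : state) : int :=
  (M.+1)%:Z * ((M.+1)%:Z * m + TT s) + ((tt s)%:Z - 1).
Definition inE (M : nat) (s : state) :=
  bs s = nseq M 0 /\ dd s = 0 /\ TT s = 0 /\ (1 <= tt s <= M)%N.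

Lemma nu_ge0 M m s : in_S M s -> ub M m s -> 0 <= nu M m s.
Proof.
move=> hS [hd hb]; have [hs h1 h2 hsum [hT1 hT2]] := S_facts hS.
have := @sum_ub (bs s) m; rewrite hs => /(_ hb) e.
rewrite /nu.
have hX : 0 <= (M.+1)%:Z * m + TT s.
  rewrite -[M.+1]addn1 PoszD mulrDl mul1r.
  move: hsum e; set S := \sum_(x <- bs s) x => hsum e. lia.
have : 0 <= (M.+1)%:Z * ((M.+1)%:Z * m + TT s) by apply: mulr_ge0.
lia.
Qed.

Lemma list_ub (B : seq int) : exists m : int, forall i, (i < size B)%N -> nth 0 B i <= m.
Proof.
elim: B => [|x B [m IH]]; first by exists 0.
have [h|h] := leP x m.
- exists m => -[|i] /= hi; [exact: h | exact: IH].
- exists x => -[|i] //= hi; apply: le_trans (ltW h); exact: IH.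
Qed.

Lemma ub_exists M s : in_S M s -> exists m, ub M m s.
Proof.
move=> /S_facts [hs _ _ _ _]. have [m hm] := list_ub (bs s).
have [h|h] := leP (dd s) m.
- exists m; split => // i hi; apply: hm; by rewrite hs.
- exists (dd s); split => // i hi; apply: le_trans (ltW h); apply: hm; by rewrite hs.
Qed.

Arguments nu_ge0 {M m s}. Arguments ub_exists {M s}.

Lemma sum_nseq0 M : \sum_(x <- nseq M (0:int)) x = 0.
Proof. by elim: M => [|M IH]; rewrite ?big_nil //= big_cons IH addr0. Qed.

Lemma zero_step M x a s : inE M x -> step M x a s ->
  tt s = (tt x).+1 /\ bs s = nseq M 0 /\ dd s = 0 /\ TT s = 0.
Proof.
case: x => B d T t [/= -> [-> [-> /andP[ht1 ht2]]]].
rewrite /step /bt /= nth_nseq.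
have -> : (t.-1 < M)%N by lia.
case: a => /=; move=> [_ [htM [h ->]]] /=.
all: try (by rewrite ltxx in h).
all: try lia.
all: try (by split).
Qed.

Arguments zero_step {M x a s}.

Lemma zero_next M (hM : (1 <= M)%N) x a s : inE M x -> step M x a s -> s = s0 M \/ inE M s.
Proof.
move=> hx hst; have [e1 [e2 [e3 e4]]] := zero_step hx hst.
have hS := step_S hst. have [hs ht1 ht2 _ _] := S_facts hS.
case: (eqVneq (tt s) M.+1) => ht.
- left; apply: s_is_s0 => // i hi; by rewrite e2 nth_nseq hi.
- right; split => //; split => //; split => //; lia.
Qed.

Arguments zero_next {M} hM {x a s}.

Lemma inE_tt M s : inE M s -> (tt s <= M)%N.
Proof. by case=> _ [_ [_ /andP[_ h]]]. Qed.

Lemma B_main M (hM : (1 <= M)%N) n : forall s m, in_S M s -> JInv M s -> ub M m s ->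
  nu M m s < n%:Z -> BR M s \/ inE M s.
Proof.
elim: n => [|n IH] s m hS hJ hu hnu.
  have := nu_ge0 hS hu. lia.
case: (s0_dec M s) => [->|hne]; first by left; exact: BR_s0.
have [hs ht1 ht2 hsum [hT1 hT2]] := S_facts hS.
move: hS hJ hu hnu hne hs ht1 ht2 hsum hT1 hT2.
case: s => B d T t /= hS hJ hu hnu hne hs ht1 ht2 hsum hT1 hT2.
case: (eqVneq t 1%N) => ht.
- subst t.
  have hall : forall i, (i < M)%N -> d <= nth 0 B i by move=> i hi; apply: hJ.
  have allm : d = m -> forall i, (i < M)%N -> nth 0 B i = m.
    move=> E i hi; apply/eqP; rewrite eq_le hu.2 // -E; exact: hall.
  have [hT0|hTpos] : T = 0 \/ 0 < T by lia.
  + subst T.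
    case: (eqVneq d m) => hdm.
    * right. have E1 := equal_vals hS (allm hdm) hdm.
      rewrite /= in E1. have hm0 : m = 0.
        have [hm|hm] : 0 <= m \/ m <= -1 by lia.
        nia. nia.
      move: hdm allm; rewrite hm0 => hdm allm. split; last by split => //; split => //; lia.
      apply: all_eq_nseq => // i hi; exact: allm hdm i hi.
    * have hdm' : d < m by rewrite lt_neqAle hdm hu.1.
      set x := mkState (map (fun x => x - 1) B) d M M.+1.
      have hx : in_S M x.
        rewrite /x; split; last by rewrite /=; lia.
        split; first by rewrite /= size_map.
        split; first by rewrite /=; lia.
        rewrite /= sum_map_add hs.
        apply: (etrans _ hsum); ring.
      have hst : step M x abplus (mkState B d 0 1).
        split => //; split => //; split => //.
        have -> : [seq x + 1 | x <- [seq x - 1 | x <- B]] = B.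
          by elim: (B) => //= y B' ->; congr cons; ring.
        by [].
      left; apply: (BR_ext _ hst) => //.
      have := IH x (m - 1) hx _ _ _.
      case.
      -- by move=> i /= h1 h2; lia.
      -- split; first by rewrite /=; lia.
         move=> i hi /=; rewrite nth_map_add; last by rewrite hs.
         have := hu.2 i hi; rewrite /=; lia.
      -- move: hnu; rewrite /nu /=. nia.
      -- by [].
      -- by move=> /inE_tt /=; lia.
  + have hdm : d < m.
      rewrite lt_neqAle hu.1 andbT; apply/eqP => E.
      have E1 := equal_vals hS (allm E) E; rewrite /= in E1.
      have [hm|hm] : 0 <= m \/ m <= -1 by lia.
      nia. nia.
    set x := mkState B (d + 1) (T - 1) M.+1.
    have hx : in_S M x.
      rewrite /x; split; last by rewrite /=; lia.
      split; first by [].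
      split; first by rewrite /=; lia.
      apply: (etrans _ hsum) => /=; ring.
    have hst : step M x adminus (mkState B d T 1).
      split => //; split => //; split; first by rewrite /=; lia.
      by congr mkState => /=; ring.
    left; apply: (BR_ext _ hst) => //.
    have := IH x m hx _ _ _.
    case.
    -- by move=> i /= h1 h2; lia.
    -- split; first by rewrite /=; lia.
       exact: hu.2.
    -- move: hnu; rewrite /nu /=. nia.
    -- by [].
    -- by move=> /inE_tt /=; lia.
- have ht2' : (2 <= t)%N by lia.
  have hu0 : (t.-2 < M)%N by lia.
  have htt : t.-1.+1 = t by lia.
  set b := nth 0 B t.-2.
  have [hlt|hge] := ltP b d.
  + set x := mkState (set_nth 0 B t.-2 d) b T t.-1.
    have hx : in_S M x.
      rewrite /x; split; last by rewrite /=; lia.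
      split; first by rewrite /= size_set_nth hs; lia.
      split; first by rewrite /=; lia.
      rewrite /= sum_set_nth; last by rewrite hs.
      apply: (etrans _ hsum); rewrite /b; ring.
    have hst : step M x aD (mkState B d T t).
      split => //; split; first by rewrite /=; lia.
      split; first by rewrite /x /bt /= nth_set_nth /= eqxx.
      rewrite /x /bt /= nth_set_nth /= eqxx set_nth_twice /b set_nth_nth0; last by rewrite hs.
      by rewrite htt.
    have := IH x m hx _ _ _.
    case.
    * move=> i /= h1 h2; rewrite nth_set_nth /=.
      case: eqP => [_|hne']; first exact: ltW.
      apply: le_trans (ltW hlt) _; apply: hJ => //=; lia.
    * split; first by rewrite /=; apply: hu.2.
      move=> i hi /=; rewrite nth_set_nth /=; case: eqP => _; [exact: hu.1 | exact: hu.2 i hi].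
    * move: hnu; rewrite /nu /=. lia.
    * by move=> hB; left; apply: (BR_ext hB hst).
    * move=> [/= hB [hb _]].
      have : nth 0 (set_nth 0 B t.-2 d) t.-2 = 0 by rewrite hB nth_nseq hu0.
      rewrite nth_set_nth /= eqxx => hd0.
      by move: hlt; rewrite hb hd0 ltxx.
  + set x := mkState B d T t.-1.
    have hx : in_S M x.
      rewrite /x; split; last by rewrite /=; lia.
      split; first by [].
      split; first by rewrite /=; lia.
      exact: hsum.
    have [a [hna hst]] : exists a, a <> aNlt /\ step M x a (mkState B d T t).
      case: (eqVneq b d) => h.
        exists aNeq; split; first by [].
        split; first exact: hx.
        split; first by rewrite /=; lia.
        split; first exact: h.
        by rewrite /= htt.
      exists aI; split; first by [].
      split; first exact: hx.
      split; first by rewrite /=; lia.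
      split; first by rewrite /bt /= lt_neqAle eq_sym h hge.
      by rewrite /= htt.
    have := IH x m hx _ _ _.
    case.
    * move=> i /= h1 h2.
      case: (eqVneq i t.-2) => [->|hne']; first exact: hge.
      apply: hJ => //=; lia.
    * exact: hu.
    * move: hnu; rewrite /nu /=. lia.
    * by move=> hB; left; apply: (BR_ext hB hst).
    * move=> hE. case: (zero_next hM hE hst) => [E|]; [by case: hne | by right].
Qed.

Lemma bwd_exists M s : in_S M s -> exists a x, a <> aNlt /\ step M x a s /\
  (tt s = 1%N -> tt x = M.+1) /\ (tt s <> 1%N -> tt x = (tt s).-1).
Proof.
move=> hS; have [hs ht1 ht2 hsum [hT1 hT2]] := S_facts hS.
move: hS hs ht1 ht2 hsum hT1 hT2.
case: s => B d T t /= hS hs ht1 ht2 hsum hT1 hT2.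
case: (eqVneq t 1%N) => ht.
- subst t.
  have [hT0|hTpos] : T = 0 \/ 0 < T by lia.
  + subst T.
    set x := mkState (map (fun x => x - 1) B) d M M.+1.
    have hx : in_S M x.
      rewrite /x; split; last by rewrite /=; lia.
      split; first by rewrite /= size_map.
      split; first by rewrite /=; lia.
      rewrite /= sum_map_add hs.
      apply: (etrans _ hsum); ring.
    have hst : step M x abplus (mkState B d 0 1).
      split => //; split => //; split => //.
      have -> : [seq x + 1 | x <- [seq x - 1 | x <- B]] = B.
        by elim: (B) => //= y B' ->; congr cons; ring.
      by [].
    exists abplus, x; split; first by []. split; first exact: hst.
    split => /= E; first [by [] | by exfalso; apply: E | by rewrite E in ht | lia].
  + set x := mkState B (d + 1) (T - 1) M.+1.
    have hx : in_S M x.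
      rewrite /x; split; last by rewrite /=; lia.
      split; first by [].
      split; first by rewrite /=; lia.
      apply: (etrans _ hsum) => /=; ring.
    have hst : step M x adminus (mkState B d T 1).
      split => //; split => //; split; first by rewrite /=; lia.
      by congr mkState => /=; ring.
    exists adminus, x; split; first by []. split; first exact: hst.
    split => /= E; first [by [] | by exfalso; apply: E | by rewrite E in ht | lia].
- have ht2' : (2 <= t)%N by lia.
  have hu0 : (t.-2 < M)%N by lia.
  have htt : t.-1.+1 = t by lia.
  set b := nth 0 B t.-2.
  have [hlt|hge] := ltP b d.
  + set x := mkState (set_nth 0 B t.-2 d) b T t.-1.
    have hx : in_S M x.
      rewrite /x; split; last by rewrite /=; lia.
      split; first by rewrite /= size_set_nth hs; lia.
      split; first by rewrite /=; lia.
      rewrite /= sum_set_nth; last by rewrite hs.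
      apply: (etrans _ hsum); rewrite /b; ring.
    have hst : step M x aD (mkState B d T t).
      split => //; split; first by rewrite /=; lia.
      split; first by rewrite /x /bt /= nth_set_nth /= eqxx.
      rewrite /x /bt /= nth_set_nth /= eqxx set_nth_twice /b set_nth_nth0; last by rewrite hs.
      by rewrite htt.
    exists aD, x; split; first by []. split; first exact: hst.
    split => /= E; first [by [] | by exfalso; apply: E | by rewrite E in ht | lia].
  + set x := mkState B d T t.-1.
    have hx : in_S M x.
      rewrite /x; split; last by rewrite /=; lia.
      split; first by [].
      split; first by rewrite /=; lia.
      exact: hsum.
    have [a [hna hst]] : exists a, a <> aNlt /\ step M x a (mkState B d T t).
      case: (eqVneq b d) => h.
        exists aNeq; split; first by [].
        split; first exact: hx.
        split; first by rewrite /=; lia.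
        split; first exact: h.
        by rewrite /= htt.
      exists aI; split; first by [].
      split; first exact: hx.
      split; first by rewrite /=; lia.
      split; first by rewrite /bt /= lt_neqAle eq_sym h hge.
      by rewrite /= htt.
    exists a, x; split; first by []. split; first exact: hst.
    split => /= E; first [by [] | by exfalso; apply: E | by rewrite E in ht | lia].
Qed.

Arguments bwd_exists {M s}.

Lemma B_gen M (hM : (1 <= M)%N) s : in_S M s -> BR M s \/ inE M s.
Proof.
move=> hS.
have [k hk] : exists k, tt s = k.+1.
  have [_ ht1 _ _ _] := S_facts hS. exists (tt s).-1; lia.
elim: k s hS hk => [|k IH] s hS hk.
- have [a [x [hna [hst [hx _]]]]] := bwd_exists hS.
  have hxS : in_S M x by case: hst.
  left; apply: (BR_ext _ hst) => //; last by move=> E; rewrite E /= in hk; lia.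
  have [m hu] := ub_exists hxS.
  have h0 := nu_ge0 hxS hu.
  have := @B_main M hM `|nu M m x|.+1 x m hxS _ hu _.
  case => //.
  + by move=> i; rewrite hx // => h1 h2; lia.
  + lia.
  + by move=> /inE_tt; rewrite hx //; lia.
- have [a [x [hna [hst [_ hx]]]]] := bwd_exists hS.
  have hxS : in_S M x by case: hst.
  case: (s0_dec M s) => [->|hne]; first by left; exact: BR_s0.
  have := IH x hxS _; rewrite hx ?hk //; case => // hB.
  + by left; apply: (BR_ext hB hst).
  + case: (zero_next hM hB hst) => [E|]; [by case: hne | by right].
Qed.

Arguments B_gen {M} hM {s}.

Lemma zk_S M k : (k < M.+1)%N -> in_S M (mkState (nseq M 0) 0 0 k.+1).
Proof.
move=> hk; split; last by rewrite /=; lia.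
split; first by rewrite /= size_nseq.
split; first by rewrite /=; lia.
by rewrite /= sum_nseq0 !addr0.
Qed.

Lemma B_all M (hM : (1 <= M)%N) s : in_S M s -> BR M s.
Proof.
move=> hS; case: (B_gen hM hS) => // hE.
set w1 := mkState (nseq M (-1)) 0 M M.+1.
have hw1 : in_S M w1.
  rewrite /w1; split; last by rewrite /=; lia.
  split; first by rewrite /= size_nseq.
  split; first by rewrite /=; lia.
  have -> : nseq M (-1 : int) = map (fun x => x + (-1)) (nseq M 0) by rewrite map_nseq add0r.
  rewrite /= sum_map_add sum_nseq0 size_nseq. ring.
have Bw1 : BR M w1 by case: (B_gen hM hw1) => // /inE_tt /=; lia.
have hz : forall k, (k < M)%N -> BR M (mkState (nseq M 0) 0 0 k.+1).
  elim=> [|k IH] hk.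
  - have hst : step M w1 abplus (mkState (nseq M 0) 0 0 1).
      split => //; split => //; split => //.
      by rewrite /w1 /= map_nseq addNr.
    apply: (BR_ext Bw1 hst) => //; move=> E; have := f_equal tt E; rewrite /=; lia.
  - have hst : step M (mkState (nseq M 0) 0 0 k.+1) aNeq (mkState (nseq M 0) 0 0 k.+2).
      split; first by apply: zk_S; lia.
      split; first by rewrite /=; lia.
      split; first by rewrite /bt /= nth_nseq; case: ifP.
      by [].
    apply: (BR_ext (IH _) hst) => //; first lia.
    move=> E; have := f_equal tt E; rewrite /=; lia.
case: hE => hB [hd [hT /andP[ht1 ht2]]].
have -> : s = mkState (nseq M 0) 0 0 (tt s).-1.+1.
  by case: s hB hd hT ht1 ht2 {hS} => B d T t /= -> -> -> ht1 _; congr mkState; lia.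
apply: hz; lia.
Qed.

Lemma uniq_ii M s p1 p2 :
  tpath M s p1 -> endpoint s p1 = s0 M -> List.Forall (fun a => a <> aI) (actions p1) ->
  List.Forall (fun x => x <> s0 M) (belast s (map snd p1)) ->
  tpath M s p2 -> endpoint s p2 = s0 M -> List.Forall (fun a => a <> aI) (actions p2) ->
  List.Forall (fun x => x <> s0 M) (belast s (map snd p2)) -> p1 = p2.
Proof.
elim: p1 s p2 => [|[a y] p1 IH] s p2 h1 e1 f1 g1 h2 e2 f2 g2.
- rewrite /endpoint /= in e1. subst s.
  case: p2 h2 e2 f2 g2 => [//|[b z] p2] /= h2 e2 f2 g2.
  by inversion g2.
- case: p2 h2 e2 f2 g2 => [|[b z] p2] /= h2 e2 f2 g2.
  + rewrite /endpoint /= in e2; subst s. by inversion g1.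
  + case: h1 => st1 h1; case: h2 => st2 h2.
    inversion f1; inversion f2; inversion g1; inversion g2; subst.
    have [ey ea] := step_fwd H1 st1. have [ez eb] := step_fwd H5 st2.
    have eyz : y = z by rewrite ey ez.
    subst z. have eab : a = b by rewrite ea eb.
    subst b. congr cons; first by rewrite ey ea.
    rewrite ey in h1 H10 e1. apply: (IH (Fst M s)) => //.
Qed.

Lemma uniq_i M s p1 p2 :
  tpath M (s0 M) p1 -> endpoint (s0 M) p1 = s -> List.Forall (fun a => a <> aNlt) (actions p1) ->
  List.Forall (fun x => x <> s0 M) (map snd p1) ->
  tpath M (s0 M) p2 -> endpoint (s0 M) p2 = s -> List.Forall (fun a => a <> aNlt) (actions p2) ->
  List.Forall (fun x => x <> s0 M) (map snd p2) -> p1 = p2.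
Proof.
elim/last_ind: p1 s p2 => [|q1 [a y] IH] s p2 h1 e1 f1 g1.
- rewrite /endpoint /= in e1. subst s.
  case/lastP: p2 => [//|q2 [b z]].
  rewrite endpoint_rcons /= /actions !map_rcons !Forall_rcons /= => _ ez _ [_ hz].
  by case: hz.
- rewrite endpoint_rcons /= in e1; subst y.
  move: h1 f1 g1; rewrite tpath_rcons /actions !map_rcons !Forall_rcons /=.
  move=> [hq1 st1] [fq1 ha] [gq1 hs].
  case/lastP: p2 => [|q2 [b z]].
  + by move=> _ e2; rewrite /endpoint /= in e2; case: hs.
  rewrite tpath_rcons endpoint_rcons /= !map_rcons !Forall_rcons /=.
  move=> [hq2 st2] ez [fq2 hb] [gq2 hz]; subst z.
  have [ex ea] := step_pred ha st1. have [ex' eb] := step_pred hb st2.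
  have eab : a = b by rewrite ea eb.
  subst b. congr rcons; last by rewrite ea.
  by apply: (IH (Pst M s)).
Qed.

Arguments B_all {M} hM {s}. Arguments F_all {M} hM {s}.
Arguments uniq_i {M s p1 p2}. Arguments uniq_ii {M s p1 p2}.

Lemma prob_pos q a : (2 <= q)%N -> 0 < prob q a.
Proof.
move=> hq; case: a => //=; rewrite ?ltr01 //.
- apply: divr_gt0; last by rewrite ltr0n; lia.
  by rewrite subr_gt0 ltr1n.
- apply: divr_gt0; first exact: ltr01.
  by rewrite ltr0n; lia.
Qed.

Theorem theorem10 (M q : nat) (hM : (1 <= M)%N) (hq : (2 <= q)%N) :
  (* (i) *)
  (forall s, in_S M s ->
     exists! p : seq (action * state),
       tpath M (s0 M) p /\ endpoint (s0 M) p = s /\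
       List.Forall (fun a => a <> aNlt) (actions p) /\
       List.Forall (fun x => x <> s0 M) (map snd p)) /\
  (* (ii) *)
  (forall s, in_S M s ->
     exists! p : seq (action * state),
       tpath M s p /\ endpoint s p = s0 M /\
       List.Forall (fun a => a <> aI) (actions p) /\
       List.Forall (fun x => x <> s0 M) (belast s (map snd p))) /\
  (* irreducibility of the BDM Markov chain *)
  (forall s s', in_S M s -> in_S M s' ->
     exists p : seq (action * state),
       tpath M s p /\ endpoint s p = s' /\
       List.Forall (fun a => 0 < prob q a) (actions p)).
Proof.
split; [|split].
- move=> s hS; have [p hp] := B_all hM hS.
  exists p; split => // p' [h1 [h2 [h3 h4]]].
  case: hp => [g1 [g2 [g3 g4]]]; exact: (uniq_i g1 g2 g3 g4 h1 h2 h3 h4).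
- move=> s hS; have [p hp] := F_all hM hS.
  exists p; split => // p' [h1 [h2 [h3 h4]]].
  case: hp => [g1 [g2 [g3 g4]]]; exact: (uniq_ii g1 g2 g3 g4 h1 h2 h3 h4).
- move=> s s' hS hS'.
  have [p [h1 [h2 _]]] := F_all hM hS.
  have [p' [g1 [g2 _]]] := B_all hM hS'.
  exists (p ++ p'); split; first by rewrite tpath_cat h2.
  split; first by rewrite endpoint_cat h2.
  apply/List.Forall_forall => a _; exact: prob_pos.
Qed.
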